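(* Let $\mathsf M=\mathrm{diag}(M_1,\dots,M_N)$ and $\bar{\mathsf M}=\mathrm{diag}(\bar M_1,\dots,\bar M_N)$ be real diagonal matrices, $|\alpha\rangle,|\bar\alpha\rangle$ real $N$-columns, $\langle a|,\langle\bar a|$ real $N$-rows, and let $\mathsf A,\bar{\mathsf A}$ be real $N\times N$ matrices satisfying $$\bar{\mathsf M}\mathsf A-\mathsf A\mathsf M=|\alpha\rangle\langle a|,\qquad \mathsf M\bar{\mathsf A}-\bar{\mathsf A}\bar{\mathsf M}=|\bar\alpha\rangle\langle\bar a|.$$ For a real $\zeta$ with $\zeta\neq\pm M_j$, $\zeta\neq\pm\bar M_j$ for all $j$, let $\mathsf H_\zeta=(\mathsf M-\zeta)(\mathsf M+\zeta)^{-1}$ and $\bar{\mathsf H}_\zeta=(\bar{\mathsf M}+\zeta)(\bar{\mathsf M}-\zeta)^{-1}$, and for a finite set $X$ of such parameters let $\mathsf H_X=\prod_{\xi\in X}\mathsf H_\xi$, $\bar{\mathsf H}_X=\prod_{\xi\in X}\bar{\mathsf H}_\xi$ and $$\tau_X=\det\big(\mathsf 1+\mathsf A\mathsf H_X\,\bar{\mathsf A}\bar{\mathsf H}_X\big),\qquad \tau=\tau_\emptyset=\det(\mathsf 1+\mathsf A\bar{\mathsf A}).$$ Then for all pairwise distinct such parameters $\alpha,\beta,\gamma$, $$\tau\,\tau_{\{\alpha,\beta,\gamma\}}=\Gamma_{\alpha,\beta\gamma}\,\tau_{\{\alpha\}}\tau_{\{\beta,\gamma\}}+\Gamma_{\beta,\alpha\gamma}\,\tau_{\{\beta\}}\tau_{\{\alpha,\gamma\}}+\Gamma_{\gamma,\alpha\beta}\,\tau_{\{\gamma\}}\tau_{\{\alpha,\beta\}},$$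 where $\Gamma_{\xi,\eta\zeta}=\dfrac{(\xi+\eta)(\xi+\zeta)}{(\xi-\eta)(\xi-\zeta)}$.
   Context: $\mathsf 1$ is the $N\times N$ identity matrix and $\mathsf M-\zeta$ means $\mathsf M-\zeta\mathsf 1$. The matrices $\mathsf H_\xi$, $\bar{\mathsf H}_\xi$ are diagonal, hence commute with each other. This equation is called the Miwa (discrete BKP) equation. *)

(* Defs.v *)
From HB Require Import structures.
From mathcomp Require Import all_boot all_order all_algebra.
Set Implicit Arguments. Unset Strict Implicit. Unset Printing Implicit Defensive.
Import Order.TTheory GRing.Theory Num.Theory.
Local Open Scope ring_scope.

Definition Hmat (R : fieldType) (N : nat) (M : 'M[R]_N) (z : R) : 'M[R]_N :=
  (M - z%:M) *m invmx (M + z%:M).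

Definition Hbmat (R : fieldType) (N : nat) (Mb : 'M[R]_N) (z : R) : 'M[R]_N :=
  (Mb + z%:M) *m invmx (Mb - z%:M).

(* H_X = prod_{xi in X} H_xi  (factors commute; X given as a list) *)
Definition HX (R : fieldType) (N : nat) (M : 'M[R]_N) (X : seq R) : 'M[R]_N :=
  \big[mulmx/1%:M]_(x <- X) Hmat M x.

Definition HbX (R : fieldType) (N : nat) (Mb : 'M[R]_N) (X : seq R) : 'M[R]_N :=
  \big[mulmx/1%:M]_(x <- X) Hbmat Mb x.

Definition tauX (R : fieldType) (N : nat) (M Mb A Ab : 'M[R]_N) (X : seq R) : R :=
  \det (1%:M + A *m HX M X *m Ab *m HbX Mb X).

Definition Gam (R : fieldType) (x y z : R) : R :=
  ((x + y) * (x + z)) / ((x - y) * (x - z)).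

Definition admissible (R : fieldType) (N : nat) (m mb : 'rV[R]_N) (z : R) : Prop :=
  forall j : 'I_N, z <> m 0 j /\ z <> - m 0 j /\ z <> mb 0 j /\ z <> - mb 0 j.

(* Main.v *)
Require Import Defs.
From HB Require Import structures.
From mathcomp Require Import all_boot all_order all_algebra.
From mathcomp Require Import ring lra.
Set Implicit Arguments. Unset Strict Implicit. Unset Printing Implicit Defensive.
Import Order.TTheory GRing.Theory Num.Theory.
Local Open Scope ring_scope.
Definition smallmx {R : Type} k (f : nat -> nat -> R) : 'M[R]_k := \matrix_(i < k, j < k) f i j.
Lemma det1E (R : comNzRingType) (f : nat -> nat -> R) :
  \det (smallmx 1 f) = f 0%N 0%N.
Proof. by rewrite /smallmx det_mx11 mxE. Qed.
Lemma det2E (R : comNzRingType) (f : nat -> nat -> R) :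
  \det (smallmx 2 f) = f 0%N 0%N * f 1%N 1%N - f 0%N 1%N * f 1%N 0%N.
Proof.
rewrite /smallmx (expand_det_row _ 0) !big_ord_recl big_ord0 /cofactor !det_mx11 !mxE /=.
rewrite /bump /= ?addn0 ?add0n /=. ring.
Qed.
Lemma det3E (R : comNzRingType) (f : nat -> nat -> R) :
  \det (smallmx 3 f) =
  f 0%N 0%N * (f 1%N 1%N * f 2%N 2%N - f 1%N 2%N * f 2%N 1%N)
  - f 0%N 1%N * (f 1%N 0%N * f 2%N 2%N - f 1%N 2%N * f 2%N 0%N)
  + f 0%N 2%N * (f 1%N 0%N * f 2%N 1%N - f 1%N 1%N * f 2%N 0%N).
Proof.
rewrite /smallmx (expand_det_row _ 0) !big_ord_recl big_ord0 /cofactor.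
rewrite !(expand_det_row _ 0) !big_ord_recl !big_ord0 /cofactor !det_mx11 !mxE /=.
rewrite /bump /= ?addn0 ?add0n /=. ring.
Qed.

Section Core.
Variable R : realFieldType.

Definition nn (ph ps P Q : R -> R) (s c : R) := ps c - ph s + ph s * ps c - P s * Q c.
Definition stau k (p : nat -> R) (Dv Pv : nat -> nat -> R) ph ps P Q : R :=
  \det (smallmx k (fun l l' => (l == l')%:R +
      \sum_(c < k) Dv l' c * Pv l c * nn ph ps P Q (p l) (p c))).
Definition Gm (x y z : R) : R := ((x + y) * (x + z)) / ((x - y) * (x - z)).

Definition pt3 (x y z : R) (l : nat) := match l with 0 => x | 1 => y | _ => z end.
Definition o1 (l : nat) := match l with 0 => 1%N | _ => 0%N end.
Definition o2 (l : nat) := match l with 2 => 1%N | _ => 2%N end.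
Definition rv3 (p : nat -> R) l := - (2 * p l) * ((p l + p (o1 l)) / (p l - p (o1 l)))
   * ((p l + p (o2 l)) / (p l - p (o2 l))).
Definition Dv3 (p : nat -> R) (e c : nat) :=
  if e == c then - ((p e + p (o1 e)) / (p e - p (o1 e)) ^+ 2 * ((p e + p (o2 e)) / (p e - p (o2 e)) ^+ 2))
  else 2 * p e / (p e - p c) ^+ 2 * ((p e + p (3 - e - c)%N) / ((p e - p (3 - e - c)%N) * (p c - p (3 - e - c)%N))).
Definition Pv3 (p : nat -> R) (l c : nat) := (p (o1 l) + p c) * (p (o2 l) + p c).

Definition pt2 (x y : R) (l : nat) := match l with 0 => x | _ => y end.
Definition oth (l : nat) := match l with 0 => 1%N | _ => 0%N end.
Definition rv2 (p : nat -> R) l := - (2 * p l) * ((p l + p (oth l)) / (p l - p (oth l))).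
Definition Dv2 (p : nat -> R) (e c : nat) :=
  if e == c then - ((p e + p (oth e)) / (p e - p (oth e)) ^+ 2) else 2 * p e / (p e - p c) ^+ 2.
Definition Pv2 (p : nat -> R) (l c : nat) := p (oth l) + p c.

Definition pt1 (x : R) (l : nat) := x.
Definition rv1 (p : nat -> R) l := - (2 * p l).
Definition Dv1 (p : nat -> R) (e c : nat) : R := -1.
Definition Pv1 (p : nat -> R) (l c : nat) : R := 1.

Definition st3 x y z := stau 3 (pt3 x y z) (Dv3 (pt3 x y z)) (Pv3 (pt3 x y z)).
Definition st2 x y := stau 2 (pt2 x y) (Dv2 (pt2 x y)) (Pv2 (pt2 x y)).
Definition st1 x := stau 1 (pt1 x) (Dv1 (pt1 x)) (Pv1 (pt1 x)).

Lemma core x y z ph ps P Q : x != y -> x != z -> y != z ->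
  st3 x y z ph ps P Q =
    Gm x y z * st1 x ph ps P Q * st2 y z ph ps P Q
  + Gm y x z * st1 y ph ps P Q * st2 x z ph ps P Q
  + Gm z x y * st1 z ph ps P Q * st2 x y ph ps P Q.
Proof.
move=> hxy hxz hyz.
rewrite /st3 /st2 /st1 /stau det3E !det2E !det1E.
rewrite !big_ord_recl !big_ord0 /=.
rewrite /Dv3 /Pv3 /Dv2 /Pv2 /Dv1 /Pv1 /pt3 /pt2 /pt1 /nn /Gm /=.
have hxy2 : x - y != 0 by rewrite subr_eq0.
have hxz2 : x - z != 0 by rewrite subr_eq0.
have hyz2 : y - z != 0 by rewrite subr_eq0.
have hyx2 : y - x != 0 by rewrite subr_eq0 eq_sym.
have hzx2 : z - x != 0 by rewrite subr_eq0 eq_sym.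
have hzy2 : z - y != 0 by rewrite subr_eq0 eq_sym.
field.
by rewrite ?hxy2 ?hxz2 ?hyz2 ?hyx2 ?hzx2 ?hzy2.
Qed.
End Core.

Lemma invmx_diag (R : fieldType) n (d : 'rV[R]_n) :
  (forall j, d 0 j != 0) -> invmx (diag_mx d) = diag_mx (\row_j (d 0 j)^-1).
Proof.
move=> hd.
have U : diag_mx d *m diag_mx (\row_j (d 0 j)^-1) = 1%:M.
  rewrite mulmx_diag; apply/matrixP => i j; rewrite !mxE mulfV //.
have [Du _] := mulmx1_unit U.
by rewrite -[invmx _]mulmx1 -U mulmxA mulVmx // mul1mx.
Qed.

Lemma diagD_scalar (R : ringType) n (d : 'rV[R]_n) (z : R) :
  diag_mx d + z%:M = diag_mx (\row_j (d 0 j + z)).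
Proof. by apply/matrixP => i j; rewrite !mxE mulrnDl. Qed.

Lemma diagB_scalar (R : ringType) n (d : 'rV[R]_n) (z : R) :
  diag_mx d - z%:M = diag_mx (\row_j (d 0 j - z)).
Proof. by apply/matrixP => i j; rewrite !mxE mulrnBl. Qed.

Lemma diag_one (R : ringType) n : diag_mx (\row_j (1 : R)) = 1%:M :> 'M_n.
Proof. by apply/matrixP => i j; rewrite !mxE. Qed.

Lemma sylvester_det (R : comRingType) n k (U : 'M[R]_(n, k)) (V : 'M[R]_(k, n)) :
  \det (1%:M + U *m V) = \det (1%:M + V *m U).
Proof.
have E1 : block_mx 1%:M 0 V 1%:M *m block_mx 1%:M (- U) 0 (1%:M + V *m U)
        = block_mx 1%:M (- U) V 1%:M.
  rewrite mulmx_block ?mulmx0 ?mul0mx ?mulmx1 ?mul1mx ?addr0 ?add0r.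
  by rewrite mulmxN addrCA addNr addr0.
have E2 : block_mx (1%:M + U *m V) (- U) 0 1%:M *m block_mx 1%:M 0 V 1%:M
        = block_mx 1%:M (- U) V 1%:M.
  rewrite mulmx_block ?mulmx0 ?mul0mx ?mulmx1 ?mul1mx ?addr0 ?add0r.
  by rewrite mulNmx addrK.
have := congr1 determinant E1; rewrite -E2 !det_mulmx.
rewrite !det_lblock !det_ublock !det1 !mul1r !mulr1.
by move->.
Qed.

Lemma lowrank_det (R : fieldType) n k (B : 'M[R]_n) (U : 'M[R]_(n, k)) (W : 'M[R]_(k, n)) :
  B \in unitmx -> \det (B + U *m W) = \det B * \det (1%:M + W *m invmx B *m U).
Proof.
move=> hB.
have -> : B + U *m W = B *m (1%:M + (invmx B *m U) *m W).
  by rewrite mulmxDr mulmx1 !mulmxA mulmxV // mul1mx.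
by rewrite det_mulmx sylvester_det mulmxA.
Qed.

Definition hfun {R : fieldType} (X : seq R) (t : R) := \prod_(xi <- X) ((t - xi) / (t + xi)).
Definition hbfun {R : fieldType} (X : seq R) (t : R) := \prod_(xi <- X) ((t + xi) / (t - xi)).

Lemma HX_diag (R : fieldType) n (m : 'rV[R]_n) (X : seq R) :
  (forall xi, xi \in X -> forall j, m 0 j + xi != 0) ->
  HX (diag_mx m) X = diag_mx (\row_j hfun X (m 0 j)).
Proof.
rewrite /HX /hfun; elim: X => [|x X IH] hX.
  by rewrite big_nil; apply/matrixP => i j; rewrite !mxE big_nil.
rewrite big_cons IH; last by move=> xi hxi; apply: hX; rewrite inE hxi orbT.
rewrite /Hmat diagB_scalar diagD_scalar invmx_diag; last first.
  by move=> j; rewrite mxE; apply: hX; rewrite inE eqxx.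
rewrite !mulmx_diag; apply/matrixP => i j; rewrite !mxE big_cons.
by [].
Qed.

Lemma HbX_diag (R : fieldType) n (mb : 'rV[R]_n) (X : seq R) :
  (forall xi, xi \in X -> forall j, mb 0 j - xi != 0) ->
  HbX (diag_mx mb) X = diag_mx (\row_j hbfun X (mb 0 j)).
Proof.
rewrite /HbX /hbfun; elim: X => [|x X IH] hX.
  by rewrite big_nil; apply/matrixP => i j; rewrite !mxE big_nil.
rewrite big_cons IH; last by move=> xi hxi; apply: hX; rewrite inE hxi orbT.
rewrite /Hbmat diagB_scalar diagD_scalar invmx_diag; last first.
  by move=> j; rewrite mxE; apply: hX; rewrite inE eqxx.
rewrite !mulmx_diag; apply/matrixP => i j; rewrite !mxE big_cons.
by [].
Qed.

Lemma conj_det (R : fieldType) n k (A Ab : 'M[R]_n) (h hb : 'rV[R]_n)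
   (U : 'M[R]_(n, k)) (V : 'M[R]_(k, n)) :
  (forall j, hb 0 j != 0) ->
  diag_mx hb *m A *m diag_mx h = A + U *m V ->
  \det (1%:M + A *m diag_mx h *m Ab *m diag_mx hb)
  = \det (1%:M + A *m Ab + U *m (V *m Ab)).
Proof.
move=> hb0 hK.
have E : diag_mx hb *m (1%:M + A *m diag_mx h *m Ab *m diag_mx hb)
       = (1%:M + A *m Ab + U *m (V *m Ab)) *m diag_mx hb.
  rewrite mulmxDr mulmx1 !mulmxA hK !mulmxDl mul1mx ?mulmxA.
  by rewrite addrA.
have := congr1 determinant E; rewrite !det_mulmx mulrC => /mulIf; apply.
by rewrite det_diag; apply/prodf_neq0 => j _.
Qed.
Lemma zm1 (V : zmodType) (x y z u : V) : x + (y + z) - (x + (z - u)) = y + u.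
Proof. by rewrite opprD opprB addrACA subrr add0r (addrACA y z u (-z)) subrr addr0. Qed.
Lemma zm2 (V : zmodType) (x y z : V) : x - (y + z) = (x - z) - y.
Proof. by rewrite opprD addrA addrAC. Qed.
Lemma zm3 (V : zmodType) (x y u v : V) : (x + y) - (u - v) - (x - u) = y + v.
Proof. by rewrite !opprB -addrA subrKA addrC subrKA addrC. Qed.

Lemma PF1_3 (R : realFieldType) (x y z s t : R) : x != y -> x != z -> y != z ->
  s + x != 0 -> s + y != 0 -> s + z != 0 -> t + x != 0 -> t + y != 0 -> t + z != 0 ->
  hfun [:: x; y; z] t - hfun [:: x; y; z] s
  = (s - t) * \sum_(l < 3) rv3 (pt3 x y z) l / ((s + pt3 x y z l) * (t + pt3 x y z l)).
Proof.
move=> hxy hxz hyz h1 h2 h3 h4 h5 h6.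
have hxy2 : x - y != 0 by rewrite subr_eq0.
have hxz2 : x - z != 0 by rewrite subr_eq0.
have hyz2 : y - z != 0 by rewrite subr_eq0.
have hyx2 : y - x != 0 by rewrite subr_eq0 eq_sym.
have hzx2 : z - x != 0 by rewrite subr_eq0 eq_sym.
have hzy2 : z - y != 0 by rewrite subr_eq0 eq_sym.
rewrite /hfun !big_cons !big_nil !big_ord_recl big_ord0 /= /rv3 /pt3 /o1 /o2 /=.
field.
by rewrite ?hxy2 ?hxz2 ?hyz2 ?hyx2 ?hzx2 ?hzy2 ?h1 ?h2 ?h3 ?h4 ?h5 ?h6.
Qed.

Lemma PF2_3 (R : realFieldType) (x y z s : R) : x != y -> x != z -> y != z ->
  s + x != 0 -> s + y != 0 -> s + z != 0 -> s - x != 0 -> s - y != 0 -> s - z != 0 ->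
  forall l l' : 'I_3,
  hbfun [:: x; y; z] s * rv3 (pt3 x y z) l' / (s + pt3 x y z l')
  = \sum_(c < 3) Dv3 (pt3 x y z) l' c * ((pt3 x y z l + pt3 x y z c) * Pv3 (pt3 x y z) l c)
       / (s - pt3 x y z c).
Proof.
move=> hxy hxz hyz h1 h2 h3 h4 h5 h6 l l'.
have hxy2 : x - y != 0 by rewrite subr_eq0.
have hxz2 : x - z != 0 by rewrite subr_eq0.
have hyz2 : y - z != 0 by rewrite subr_eq0.
have hyx2 : y - x != 0 by rewrite subr_eq0 eq_sym.
have hzx2 : z - x != 0 by rewrite subr_eq0 eq_sym.
have hzy2 : z - y != 0 by rewrite subr_eq0 eq_sym.
rewrite /hbfun !big_cons !big_nil !big_ord_recl big_ord0 /=.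
case: l => [[|[|[|l]]] hl] //; case: l' => [[|[|[|l']]] hl'] //;
  rewrite /Dv3 /Pv3 /rv3 /pt3 /o1 /o2 /=; field;
  by rewrite ?hxy2 ?hxz2 ?hyz2 ?hyx2 ?hzx2 ?hzy2 ?h1 ?h2 ?h3 ?h4 ?h5 ?h6.
Qed.

Lemma PF1_2 (R : realFieldType) (x y s t : R) : x != y ->
  s + x != 0 -> s + y != 0 -> t + x != 0 -> t + y != 0 ->
  hfun [:: x; y] t - hfun [:: x; y] s
  = (s - t) * \sum_(l < 2) rv2 (pt2 x y) l / ((s + pt2 x y l) * (t + pt2 x y l)).
Proof.
move=> hxy h1 h2 h4 h5.
have hxy2 : x - y != 0 by rewrite subr_eq0.
have hyx2 : y - x != 0 by rewrite subr_eq0 eq_sym.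
rewrite /hfun !big_cons !big_nil !big_ord_recl big_ord0 /= /rv2 /pt2 /oth /=.
field.
by rewrite ?hxy2 ?hyx2 ?h1 ?h2 ?h4 ?h5.
Qed.

Lemma PF2_2 (R : realFieldType) (x y s : R) : x != y ->
  s + x != 0 -> s + y != 0 -> s - x != 0 -> s - y != 0 ->
  forall l l' : 'I_2,
  hbfun [:: x; y] s * rv2 (pt2 x y) l' / (s + pt2 x y l')
  = \sum_(c < 2) Dv2 (pt2 x y) l' c * ((pt2 x y l + pt2 x y c) * Pv2 (pt2 x y) l c)
       / (s - pt2 x y c).
Proof.
move=> hxy h1 h2 h4 h5 l l'.
have hxy2 : x - y != 0 by rewrite subr_eq0.
have hyx2 : y - x != 0 by rewrite subr_eq0 eq_sym.
rewrite /hbfun !big_cons !big_nil !big_ord_recl big_ord0 /=.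
case: l => [[|[|l]] hl] //; case: l' => [[|[|l']] hl'] //;
  rewrite /Dv2 /Pv2 /rv2 /pt2 /oth /=; field;
  by rewrite ?hxy2 ?hyx2 ?h1 ?h2 ?h4 ?h5.
Qed.

Lemma PF1_1 (R : realFieldType) (x s t : R) :
  s + x != 0 -> t + x != 0 ->
  hfun [:: x] t - hfun [:: x] s
  = (s - t) * \sum_(l < 1) rv1 (pt1 x) l / ((s + pt1 x l) * (t + pt1 x l)).
Proof.
move=> h1 h4.
rewrite /hfun !big_cons !big_nil !big_ord_recl big_ord0 /= /rv1 /pt1 /=.
field.
by rewrite ?h1 ?h4.
Qed.

Lemma PF2_1 (R : realFieldType) (x s : R) :
  s + x != 0 -> s - x != 0 ->
  forall l l' : 'I_1,
  hbfun [:: x] s * rv1 (pt1 x) l' / (s + pt1 x l')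
  = \sum_(c < 1) Dv1 (pt1 x) l' c * ((pt1 x l + pt1 x c) * Pv1 (pt1 x) l c)
       / (s - pt1 x c).
Proof.
move=> h1 h4 l l'.
rewrite /hbfun !big_cons !big_nil !big_ord_recl big_ord0 /=.
rewrite /Dv1 /Pv1 /rv1 /pt1 /=; field.
by rewrite ?h1 ?h4.
Qed.

Section Main.
Variable R : realFieldType.
Variable n : nat.
Variables (m mb : 'rV[R]_n) (alpha alphab : 'cV[R]_n) (a ab : 'rV[R]_n) (A Ab : 'M[R]_n).
Hypothesis hA : diag_mx mb *m A - A *m diag_mx m = alpha *m a.
Hypothesis hAb : diag_mx m *m Ab - Ab *m diag_mx mb = alphab *m ab.

Definition Bm := 1%:M + A *m Ab.
Hypothesis hB : Bm \in unitmx.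
Definition Rv := invmx Bm.
Definition Sm := Ab *m Rv.
Definition pp := alphab - Sm *m A *m alphab.
Definition qq := ab *m Rv.

Lemma DISP : diag_mx m *m Sm - Sm *m diag_mx mb = pp *m qq - (Sm *m alpha) *m (a *m Sm).
Proof.
have hA' : diag_mx mb *m A = alpha *m a + A *m diag_mx m by rewrite -hA subrK.
have hAb' : Ab *m diag_mx mb = diag_mx m *m Ab - alphab *m ab.
  by rewrite -hAb opprB addrC subrK.
pose Z := alpha *m (a *m Ab) + A *m alphab *m ab.
have ZB : diag_mx mb *m Bm = Bm *m diag_mx mb + Z.
  rewrite /Bm mulmxDr mulmxDl mulmx1 mul1mx mulmxA hA' -mulmxA hAb'.
  rewrite mulmxDl mulmxBr -!mulmxA /Z.
  rewrite -addrA; congr (_ + _).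
  by rewrite (mulmxA A alphab ab) [RHS]addrC addrACA subrr addr0.
have RMb : Rv *m diag_mx mb = diag_mx mb *m Rv + Rv *m Z *m Rv.
  rewrite -[Rv *m diag_mx mb]mulmx1 -(mulmxV hB) mulmxA -(mulmxA Rv) ZB.
  by rewrite mulmxDr mulmxDl mulmxA mulVmx // mul1mx -mulmxA.
rewrite /Sm -mulmxA RMb mulmxDr !mulmxA opprD addrA -mulmxBl hAb.
rewrite /Z !mulmxDr !mulmxDl !mulmxA /pp /qq !mulNmx /Sm ?mulmxA.
by rewrite zm2.
Qed.

Definition asr (s : R) : 'rV[R]_n := \row_j (a 0 j / (m 0 j + s)).
Definition alc (c : R) : 'cV[R]_n := \col_i (alpha i 0 / (mb 0 i - c)).
Definition phf s := (asr s *m Sm *m alpha) 0 0.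
Definition psf c := (a *m Sm *m alc c) 0 0.
Definition Pf s := (asr s *m pp) 0 0.
Definition Qf c := (qq *m alc c) 0 0.
Definition wf s c := (asr s *m Sm *m alc c) 0 0.
Definition nn0 (s c : R) := nn phf psf Pf Qf s c.

Lemma KEY s c : (forall j, m 0 j + s != 0) -> (forall j, mb 0 j - c != 0) ->
  (s + c) * wf s c = nn0 s c.
Proof.
move=> hs hc.
have E1 : asr s *m (diag_mx m + s%:M) = a.
  by rewrite diagD_scalar mul_mx_diag; apply/rowP => j; rewrite !mxE divfK ?hs.
have E2 : (diag_mx mb - c%:M) *m alc c = alpha.
  by rewrite diagB_scalar mul_diag_mx; apply/colP => i; rewrite !mxE mulrC divfK ?hc.
have E3 : (s + c) *: Sm = (diag_mx m + s%:M) *m Sm - Sm *m (diag_mx mb - c%:M)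
                         - (diag_mx m *m Sm - Sm *m diag_mx mb).
  by rewrite mulmxDl mulmxBr mul_scalar_mx mul_mx_scalar scalerDl zm3.
have T1 : (asr s *m ((diag_mx m + s%:M) *m Sm) *m alc c) 0 0 = psf c.
  by rewrite mulmxA E1.
have T2 : (asr s *m (Sm *m (diag_mx mb - c%:M)) *m alc c) 0 0 = phf s.
  by rewrite -mulmxA -(mulmxA Sm) E2 mulmxA.
have M11 : forall (X Y : 'M[R]_1), (X *m Y) 0 0 = X 0 0 * Y 0 0.
  by move=> X Y; rewrite mxE big_ord1.
have entB : forall (X Y : 'M[R]_1), (X - Y) 0 0 = X 0 0 - Y 0 0.
  by move=> X Y; rewrite !mxE.
have T3 : (asr s *m (diag_mx m *m Sm - Sm *m diag_mx mb) *m alc c) 0 0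
          = Pf s * Qf c - phf s * psf c.
  have P1 : asr s *m (pp *m qq) *m alc c = (asr s *m pp) *m (qq *m alc c).
    by rewrite !mulmxA.
  have P2 : asr s *m (Sm *m alpha *m (a *m Sm)) *m alc c
          = (asr s *m Sm *m alpha) *m (a *m Sm *m alc c).
    by rewrite !mulmxA.
  by rewrite DISP mulmxBr mulmxBl entB P1 P2 !M11.
have W : (s + c) * wf s c = (asr s *m ((s + c) *: Sm) *m alc c) 0 0.
  by rewrite -scalemxAr -scalemxAl mxE.
have D : forall X Y Z : 'M[R]_n, (asr s *m (X - Y - Z) *m alc c) 0 0
   = (asr s *m X *m alc c) 0 0 - (asr s *m Y *m alc c) 0 0 - (asr s *m Z *m alc c) 0 0.
  by move=> X Y Z; rewrite !mulmxBr !mulmxBl !entB.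
rewrite W E3 D T1 T2 T3 /nn0 /nn.
ring.
Qed.


Lemma mulmx_ij (p1 p2 p3 : nat) (X : 'M[R]_(p1, p2)) (Y : 'M[R]_(p2, p3)) i j :
  (X *m Y) i j = \sum_k X i k * Y k j.
Proof. by rewrite mxE. Qed.

Lemma tau_reduce k (p : nat -> R) (rv : nat -> R) (Dv Pv : nat -> nat -> R) (X : seq R) :
  (forall xi, xi \in X -> forall j, m 0 j + xi != 0) ->
  (forall xi, xi \in X -> forall j, mb 0 j - xi != 0) ->
  (forall xi, xi \in X -> forall j, mb 0 j + xi != 0) ->
  (forall l : 'I_k, forall j, m 0 j + p l != 0) ->
  (forall l : 'I_k, forall j, mb 0 j - p l != 0) ->
  (forall l : 'I_k, forall j, mb 0 j + p l != 0) ->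
  (forall i j, hfun X (m 0 j) - hfun X (mb 0 i)
      = (mb 0 i - m 0 j) * \sum_(l < k) rv l / ((mb 0 i + p l) * (m 0 j + p l))) ->
  (forall i (l l' : 'I_k), hbfun X (mb 0 i) * rv l' / (mb 0 i + p l')
      = \sum_(c < k) Dv l' c * ((p l + p c) * Pv l c) / (mb 0 i - p c)) ->
  tauX (diag_mx m) (diag_mx mb) A Ab X = \det Bm * stau k p Dv Pv phf psf Pf Qf.
Proof.
move=> hXm hXmb hXmb' hpm hpmb hpmb' PF1 PF2.
rewrite /tauX HX_diag // HbX_diag //.
set h := \row_j hfun X (m 0 j).
set hb := \row_j hbfun X (mb 0 j).
pose U0 : 'M[R]_(n, k) := \matrix_(i, l) (hbfun X (mb 0 i) * rv l * alpha i 0 / (mb 0 i + p l)).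
pose V0 : 'M[R]_(k, n) := \matrix_(l, j) (asr (p l) 0 j).
have hb0 : forall j, hb 0 j != 0.
  move=> j; rewrite mxE /hbfun prodf_seq_neq0; apply/allP => xi hxi /=.
  by rewrite mulf_neq0 ?invr_eq0 ?hXmb ?hXmb'.
have HK : diag_mx hb *m A *m diag_mx h = A + U0 *m V0.
  apply/matrixP => i j.
  have hAij : (diag_mx mb *m A - A *m diag_mx m) i j = (alpha *m a) i j by rewrite hA.
  have e1 : (diag_mx mb *m A) i j = mb 0 i * A i j by rewrite mul_diag_mx mxE.
  have e2 : (A *m diag_mx m) i j = A i j * m 0 j by rewrite mul_mx_diag mxE.
  have e3 : (alpha *m a) i j = alpha i 0 * a 0 j by rewrite mxE big_ord1.
  have entB : forall Y1 Y2 : 'M[R]_n, (Y1 - Y2) i j = Y1 i j - Y2 i j by move=> Y1 Y2; rewrite !mxE.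
  move: hAij; rewrite entB e1 e2 e3 => hAij.
  rewrite mul_mx_diag mxE mul_diag_mx !mxE.
  set s := mb 0 i; set t := m 0 j.
  have hbh : hbfun X s * hfun X s = 1.
    rewrite /hbfun /hfun -big_split /=; apply: big1_seq => xi /andP[_ hxi].
    have h1 := hXmb xi hxi i; have h2 := hXmb' xi hxi i.
    by rewrite mulf_div [W in _ / W]mulrC divff // mulf_neq0.
  have sumE : \sum_l (U0 i l * V0 l j)
      = hbfun X s * (alpha i 0 * a 0 j) * \sum_(l < k) rv l / ((s + p l) * (t + p l)).
    rewrite big_distrr; apply: eq_bigr => l _; rewrite !mxE.
    have h1 := hpmb' l i; have h2 := hpm l j.
    rewrite /s /t /=; field; by rewrite h1 h2.
  rewrite sumE.
  have PF := PF1 i j; rewrite -/s -/t in PF.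
  have ht : hfun X t = hfun X s + (s - t) * \sum_(l < k) rv l / ((s + p l) * (t + p l)).
    by rewrite -PF addrC subrK.
  transitivity (hbfun X s * hfun X s * A i j + hbfun X s * (s * A i j - A i j * t)
       * \sum_(l < k) rv l / ((s + p l) * (t + p l))).
    by rewrite ht; ring.
  by rewrite hbh mul1r hAij.
rewrite (conj_det _ hb0 HK) lowrank_det //.
congr (_ * _); rewrite /stau /smallmx; congr (\det _); apply/matrixP => l l'.
have entD : forall Y1 Y2 : 'M[R]_k, (Y1 + Y2) l l' = Y1 l l' + Y2 l l'.
  by move=> Y1 Y2; rewrite !mxE.
rewrite entD -(mulmxA V0 Ab) -/Rv -/Sm [RHS]mxE [1%:M l l']mxE.
congr (_ + _).
rewrite mulmx_ij.
have VS : forall j, (V0 *m Sm) l j = (asr (p l) *m Sm) 0 j.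
  by move=> j; rewrite !mulmx_ij; apply: eq_bigr => i _; rewrite mxE.
have UE : forall j, U0 j l' =
    (\sum_(c < k) Dv l' c * ((p l + p c) * Pv l c) / (mb 0 j - p c)) * alpha j 0.
  by move=> j; rewrite mxE mulrAC (PF2 j l l').
under eq_bigr do rewrite VS UE.
transitivity (\sum_(c < k) Dv l' c * ((p l + p c) * Pv l c) * wf (p l) (p c)).
  rewrite /wf.
  under [RHS]eq_bigr => c _ do rewrite mulmx_ij big_distrr /=.
  rewrite exchange_big /=; apply: eq_bigr => j _.
  rewrite big_distrl big_distrr /=; apply: eq_bigr => c _.
  have alcE : forall (c0 : R) (j0 : 'I_n), alc c0 j0 0 = alpha j0 0 / (mb 0 j0 - c0).
    by move=> c0 j0; rewrite mxE.
  rewrite alcE; ring.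
apply: eq_bigr => c _.
have K := KEY (hpm l) (hpmb c); rewrite /nn0 in K.
rewrite -K; ring.
Qed.

Lemma adm_facts z : admissible m mb z ->
  [/\ forall j, m 0 j + z != 0, forall j, mb 0 j - z != 0 & forall j, mb 0 j + z != 0].
Proof.
move=> hz; split => j; have [h1 [h2 [h3 h4]]] := hz j.
- by rewrite addrC addr_eq0; apply/eqP.
- by rewrite subr_eq0 eq_sym; apply/eqP.
- by rewrite addrC addr_eq0; apply/eqP.
Qed.

Lemma tau3 x y z : admissible m mb x -> admissible m mb y -> admissible m mb z ->
  x != y -> x != z -> y != z ->
  tauX (diag_mx m) (diag_mx mb) A Ab [:: x; y; z] = \det Bm * st3 x y z phf psf Pf Qf.
Proof.
move=> ax ay az hxy hxz hyz.
have [mx bx1 bx2] := adm_facts ax.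
have [my by1 by2] := adm_facts ay.
have [mz bz1 bz2] := adm_facts az.
apply: (tau_reduce (rv := rv3 (pt3 x y z))).
- by move=> xi; rewrite !inE => /or3P [] /eqP ->.
- by move=> xi; rewrite !inE => /or3P [] /eqP ->.
- by move=> xi; rewrite !inE => /or3P [] /eqP ->.
- by case=> [[|[|[|?]]] ?].
- by case=> [[|[|[|?]]] ?].
- by case=> [[|[|[|?]]] ?].
- by move=> i j; apply: PF1_3.
- by move=> i l l'; apply: PF2_3.
Qed.

Lemma tau2 x y : admissible m mb x -> admissible m mb y -> x != y ->
  tauX (diag_mx m) (diag_mx mb) A Ab [:: x; y] = \det Bm * st2 x y phf psf Pf Qf.
Proof.
move=> ax ay hxy.
have [mx bx1 bx2] := adm_facts ax.
have [my by1 by2] := adm_facts ay.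
apply: (tau_reduce (rv := rv2 (pt2 x y))).
- by move=> xi; rewrite !inE => /orP [] /eqP ->.
- by move=> xi; rewrite !inE => /orP [] /eqP ->.
- by move=> xi; rewrite !inE => /orP [] /eqP ->.
- by case=> [[|[|?]] ?].
- by case=> [[|[|?]] ?].
- by case=> [[|[|?]] ?].
- by move=> i j; apply: PF1_2.
- by move=> i l l'; apply: PF2_2.
Qed.

Lemma tau1 x : admissible m mb x ->
  tauX (diag_mx m) (diag_mx mb) A Ab [:: x] = \det Bm * st1 x phf psf Pf Qf.
Proof.
move=> ax.
have [mx bx1 bx2] := adm_facts ax.
apply: (tau_reduce (rv := rv1 (pt1 x))).
- by move=> xi; rewrite !inE => /eqP ->.
- by move=> xi; rewrite !inE => /eqP ->.
- by move=> xi; rewrite !inE => /eqP ->.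
- by case=> [[|?] ?].
- by case=> [[|?] ?].
- by case=> [[|?] ?].
- by move=> i j; apply: PF1_1.
- by move=> i l l'; apply: PF2_1.
Qed.

Lemma tau0 : tauX (diag_mx m) (diag_mx mb) A Ab [::] = \det Bm.
Proof. by rewrite /tauX /HX /HbX !big_nil !mulmx1. Qed.

Lemma main_cond x y z :
  admissible m mb x -> admissible m mb y -> admissible m mb z ->
  x != y -> x != z -> y != z ->
  let tau := tauX (diag_mx m) (diag_mx mb) A Ab in
  tau [::] * tau [:: x; y; z] =
    Gam x y z * tau [:: x] * tau [:: y; z]
  + Gam y x z * tau [:: y] * tau [:: x; z]
  + Gam z x y * tau [:: z] * tau [:: x; y].
Proof.
move=> ax ay az hxy hxz hyz /=.
rewrite tau0 tau3 // !tau2 // !tau1 // core // /Gm /Gam.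
ring.
Qed.

End Main.

Lemma cp_eval (R : comNzRingType) n (N : 'M[R]_n) (l : R) :
  (char_poly (- N)).[l] = \det (l%:M + N).
Proof.
rewrite /char_poly -horner_evalE -det_map_mx; congr (\det _); apply/matrixP => i j.
by rewrite !mxE /= ?horner_evalE hornerD hornerN hornerMn hornerX hornerC opprK.
Qed.

Lemma scaled (R : realFieldType) n (m mb : 'rV[R]_n) (alpha alphab : 'cV[R]_n)
  (a ab : 'rV[R]_n) (A Ab : 'M[R]_n)
  (hA : diag_mx mb *m A - A *m diag_mx m = alpha *m a)
  (hAb : diag_mx m *m Ab - Ab *m diag_mx mb = alphab *m ab)
  (x y z : R)
  (hx : admissible m mb x) (hy : admissible m mb y) (hz : admissible m mb z)
  (hxy : x != y) (hxz : x != z) (hyz : y != z) (l : R) :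
  l != 0 -> \det (l%:M + A *m Ab) != 0 ->
  let f := fun X => \det (l%:M + A *m HX (diag_mx m) X *m Ab *m HbX (diag_mx mb) X) in
  f [::] * f [:: x; y; z] =
    Gam x y z * f [:: x] * f [:: y; z]
  + Gam y x z * f [:: y] * f [:: x; z]
  + Gam z x y * f [:: z] * f [:: x; y].
Proof.
move=> l0 hdet f.
set c := l^-1.
have c0 : c != 0 by rewrite invr_eq0.
have hA' : diag_mx mb *m (c *: A) - (c *: A) *m diag_mx m = (c *: alpha) *m a.
  by rewrite -scalemxAr -!scalemxAl -scalerBr hA.
have one : 1%:M = c *: (l%:M : 'M[R]_n) by rewrite scale_scalar_mx mulVf.
have fE : forall X, tauX (diag_mx m) (diag_mx mb) (c *: A) Ab X = c ^+ n * f X.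
  by move=> X; rewrite /tauX /f -!scalemxAl one -scalerDr detZ.
have hB' : Bm (c *: A) Ab \in unitmx.
  rewrite unitmxE unitfE /Bm -scalemxAl one -scalerDr detZ.
  by rewrite mulf_neq0 // expf_neq0.
have H := main_cond hA' hAb hB' hx hy hz hxy hxz hyz.
rewrite /= !fE in H.
have cn : c ^+ n * c ^+ n != 0 by rewrite mulf_neq0 // expf_neq0.
apply: (mulfI cn).
transitivity (c ^+ n * f [::] * (c ^+ n * f [:: x; y; z])); first by ring.
rewrite H; ring.
Qed.

Unset Implicit Arguments.

Theorem proposition1 (R : realFieldType) (N : nat)
  (m mb : 'rV[R]_N) (alpha alphab : 'cV[R]_N) (a ab : 'rV[R]_N)
  (A Ab : 'M[R]_N)
  (hA : diag_mx mb *m A - A *m diag_mx m = alpha *m a)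
  (hAb : diag_mx m *m Ab - Ab *m diag_mx mb = alphab *m ab)
  (x y z : R)
  (hx : admissible m mb x) (hy : admissible m mb y) (hz : admissible m mb z)
  (hxy : x != y) (hxz : x != z) (hyz : y != z) :
  let tau := tauX (diag_mx m) (diag_mx mb) A Ab in
  tau [::] * tau [:: x; y; z] =
    Gam x y z * tau [:: x] * tau [:: y; z]
  + Gam y x z * tau [:: y] * tau [:: x; z]
  + Gam z x y * tau [:: z] * tau [:: x; y].
Proof.
move=> tau.
pose NX X := A *m HX (diag_mx m) X *m Ab *m HbX (diag_mx mb) X.
pose cp X := char_poly (- NX X).
pose D := cp [::] * cp [:: x; y; z]
   - ((Gam x y z)%:P * cp [:: x] * cp [:: y; z] + (Gam y x z)%:P * cp [:: y] * cp [:: x; z]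
      + (Gam z x y)%:P * cp [:: z] * cp [:: x; y]).
have Dev : forall l, D.[l] = \det (l%:M + NX [::]) * \det (l%:M + NX [:: x; y; z])
   - (Gam x y z * \det (l%:M + NX [:: x]) * \det (l%:M + NX [:: y; z])
      + Gam y x z * \det (l%:M + NX [:: y]) * \det (l%:M + NX [:: x; z])
      + Gam z x y * \det (l%:M + NX [:: z]) * \det (l%:M + NX [:: x; y])).
  by move=> l; rewrite /D !hornerE !cp_eval.
have N0 : NX [::] = A *m Ab by rewrite /NX /HX /HbX !big_nil !mulmx1.
have hD : forall l, l != 0 -> (cp [::]).[l] != 0 -> D.[l] = 0.
  move=> l l0 c0; rewrite Dev; apply/eqP; rewrite subr_eq0; apply/eqP.
  rewrite /cp cp_eval N0 in c0.
  exact: (scaled hA hAb hx hy hz hxy hxz hyz l0 c0).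
have Q0 : 'X * cp [::] * D = 0.
  apply: (@roots_geq_poly_eq0 _ _ [seq i%:R | i <- iota 0 (size ('X * cp [::] * D))]).
  - apply/allP => r _; rewrite /root !hornerM hornerX.
    case: (eqVneq r 0) => [->|r0]; first by rewrite !mul0r.
    case: (eqVneq (cp [::]).[r] 0) => [->|c0]; first by rewrite mulr0 mul0r.
    by rewrite hD // mulr0.
  - rewrite map_inj_uniq ?iota_uniq // => i j /eqP; rewrite eqr_nat => /eqP.
    done.
  - by rewrite size_map size_iota.
have D0 : D = 0.
  move/eqP: Q0; rewrite mulf_eq0 => /orP [|/eqP //].
  rewrite mulf_eq0 polyX_eq0 /= => cp0.
  by move: (monic_neq0 (char_poly_monic (- NX [::]))); rewrite cp0.
have := Dev 1; rewrite D0 horner0 => /esym/eqP; rewrite subr_eq0 => /eqP.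
by [].
Qed.
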